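(* Let $\mathcal{S}=(S,\overline{S})$ be a bisection, $u$ a vertex of the graph, $(A_u,B_u)$ a $u$-pair for $\mathcal{S}$, and $\mathcal{T}$ the bisection associated with $(A_u,B_u)$. Then $\mathrm{def}_{\mathcal{T}}(u)\ge a_u+1$.
   Context: $G$ is a finite simple undirected graph with an odd number $n$ of vertices; $N(u)$ is the set of neighbors of $u$ and $\overline{N}(u)$ the set of vertices other than $u$ not adjacent to $u$. Each vertex $x$ has stubbornness $\alpha_x\in(0,1)$ and $a_x=\lfloor\alpha_x/(1-\alpha_x)\rfloor$. $W(A,B)$ is the number of edges with one endpoint in $A$ and the other in $B$. A bisection $(S,\overline{S})$ partitions the vertices with $|S|=\frac{n+1}{2}$, $|\overline{S}|=\frac{n-1}{2}$. Deficiency: $\mathrm{def}_{\mathcal{S}}(x)=W(x,S)-W(x,\overline{S})$ for $x\in S$, $W(x,\overline{S})-W(x,S)$ for $x\in\overline{S}$. Rank: $\mathrm{rank}_{\mathcal{S}}(u)=\lceil (a_u+1-\mathrm{def}_{\mathcal{S}}(u))/2\rceil$. A $u$-pair for $\mathcal{S}$ is a pair of sets $(A_u,B_u)$ with: if $u\in S$, $A_u\subseteq S\cap\overline{N}(u)$, $B_u\subseteq\overline{S}\cap N(u)$, $|A_u|=|B_u|=\mathrm{rank}_{\mathcal{S}}(u)$; if $u\in\overline{S}$, $A_u\subseteq S\cap N(u)$, $B_u\subseteq\overline{S}\cap\overline{N}(u)$, $|A_u|=\mathrm{rank}_{\mathcal{S}}(u)$, $|B_u|=\mathrm{rank}_{\mathcal{S}}(u)-1$.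 The bisection associated with the $u$-pair is $\mathcal{T}=(S\setminus A_u\cup B_u,\ \overline{S}\setminus B_u\cup A_u)$ if $u\in S$, and $\mathcal{T}=(\overline{S}\setminus B_u\cup A_u,\ S\setminus A_u\cup B_u)$ if $u\in\overline{S}$. *)

(* Defs.v *)
From mathcomp Require Import all_boot all_order all_algebra.
Set Implicit Arguments. Unset Strict Implicit. Unset Printing Implicit Defensive.
Import Order.TTheory GRing.Theory Num.Theory.
Local Open Scope ring_scope.

(* Graph: vertex set T (finType), adjacency e (symmetric, irreflexive).
   A bisection (S, ~: S) is represented by its first part S. *)
Section Defs.
Variables (T : finType) (e : rel T).

Definition W (x : T) (A : {set T}) : nat := #|[set y in A | e x y]|.

Definition stub_a (R : archiRealFieldType) (alpha : T -> R) (x : T) : int :=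
  Num.floor (alpha x / (1 - alpha x)).

Definition deficiency (S : {set T}) (x : T) : int :=
  if x \in S then (W x S)%:Z - (W x (~: S))%:Z
  else (W x (~: S))%:Z - (W x S)%:Z.

Definition rank (R : archiRealFieldType) (alpha : T -> R) (S : {set T}) (u : T) : int :=
  Num.ceil (((stub_a alpha u + 1 - deficiency S u)%:~R : R) / 2).

Definition nonnbr (u : T) : {set T} := [set y | (y != u) && ~~ e u y].
Definition nbr (u : T) : {set T} := [set y | e u y].

Definition is_bisection (S : {set T}) : Prop := (#|S| = (#|T|.+1)./2)%N.

Definition is_u_pair (R : archiRealFieldType) (alpha : T -> R) (S : {set T}) (u : T)
    (A B : {set T}) : Prop :=
  if u \in S then
    [/\ A \subset S :&: nonnbr u, B \subset (~: S) :&: nbr u,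
        #|A|%:Z = rank alpha S u & #|B|%:Z = rank alpha S u]
  else
    [/\ A \subset S :&: nbr u, B \subset (~: S) :&: nonnbr u,
        #|A|%:Z = rank alpha S u & #|B|%:Z = rank alpha S u - 1].

Definition assoc_bisection (S : {set T}) (u : T) (A B : {set T}) : {set T} :=
  if u \in S then (S :\: A) :|: B else ((~: S) :\: B) :|: A.

End Defs.

(* Main.v *)
Require Import Defs.
From mathcomp Require Import all_boot all_order all_algebra.
From mathcomp Require Import zify.
Import Order.TTheory GRing.Theory Num.Theory.
Local Open Scope ring_scope.

Lemma W_swap (T : finType) (e : rel T) (u : T) (P X Y : {set T}) :
  X \subset P :&: nonnbr e u -> Y \subset (~: P) :&: nbr e u ->
  ((W e u ((P :\: X) :|: Y))%:Z = (W e u P)%:Z + #|Y|%:Z) /\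
  ((W e u (~: ((P :\: X) :|: Y)))%:Z + #|Y|%:Z = (W e u (~: P))%:Z).
Proof.
move=> /subsetP hX /subsetP hY.
have fX y : y \in X -> (y \in P) && ~~ e u y.
  by move/hX; rewrite !inE => /andP[-> /andP[_ ->]].
have fY y : y \in Y -> (y \notin P) && e u y.
  by move/hY; rewrite !inE.
split.
- have E : [set y in (P :\: X) :|: Y | e u y] = [set y in P | e u y] :|: Y.
    apply/setP => y; rewrite !inE; move: (fX y) (fY y).
    case: (y \in X); case: (y \in Y); case: (y \in P); case: (e u y) => //=; try (by move=> _ H; have := H is_true_true); by move=> H; have := H is_true_true.
  have I : [set y in P | e u y] :&: Y = set0.
    apply/setP => y; rewrite !inE; case yY: (y \in Y); last by rewrite andbF.
    by move: (fY y yY) => /andP[/negbTE ->].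
  rewrite /W E -PoszD; congr Posz.
  by have := cardsUI [set y in P | e u y] Y; rewrite I cards0 addn0.
- have E : [set y in ~: ((P :\: X) :|: Y) | e u y] :|: Y = [set y in ~: P | e u y].
    apply/setP => y; rewrite !inE; move: (fX y) (fY y).
    case: (y \in X); case: (y \in Y); case: (y \in P); case: (e u y) => //=; try (by move=> _ H; have := H is_true_true); by move=> H; have := H is_true_true.
  have I : [set y in ~: ((P :\: X) :|: Y) | e u y] :&: Y = set0.
    apply/setP => y; rewrite !inE; case yY: (y \in Y); last by rewrite andbF.
    by rewrite orbT.
  rewrite /W -E -PoszD; congr Posz.
  by have := cardsUI [set y in ~: ((P :\: X) :|: Y) | e u y] Y; rewrite I cards0 addn0.
Qed.

Lemma ceil2 (R : archiRealFieldType) (k : int) :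
  k <= 2 * Num.ceil ((k%:~R : R) / 2).
Proof.
have h := ceil_ge ((k%:~R : R) / 2).
move: h; set c := Num.ceil _ => h.
rewrite -(ler_int R) intrM /=.
have -> : (k%:~R : R) = 2 * ((k%:~R : R) / 2) by rewrite mulrC divfK // pnatr_eq0.
by rewrite ler_pM2l.
Qed.

Theorem lemma3 (R : archiRealFieldType) (T : finType) (e : rel T)
  (e_sym : symmetric e) (e_irr : irreflexive e) (n_odd : odd #|T|)
  (alpha : T -> R) (alpha_range : forall x, 0 < alpha x < 1)
  (S : {set T}) (HS : is_bisection S) (u : T) (A B : {set T})
  (HAB : is_u_pair e alpha S u A B) :
  deficiency e (assoc_bisection S u A B) u >= stub_a alpha u + 1.
Proof.
have hc := ceil2 R (stub_a alpha u + 1 - deficiency e S u).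
move: HAB hc; rewrite /is_u_pair /assoc_bisection /rank /deficiency.
case uS: (u \in S).
- move=> [hA hB _ cB].
  have [h1 h2] := @W_swap _ _ _ _ _ _ hA hB.
  have uin : u \in (S :\: A) :|: B.
    rewrite !inE uS andbT; apply/orP; left; apply/negP => /(subsetP hA).
    by rewrite !inE eqxx /= andbF.
  rewrite uin /= => hc; rewrite -cB in hc.
  lia.
- move=> [hA hB cA _].
  have hB' : B \subset (~: S) :&: nonnbr e u by [].
  have hA' : A \subset (~: ~: S) :&: nbr e u by rewrite setCK.
  have [h1 h2] := @W_swap _ _ _ _ _ _ hB' hA'.
  rewrite setCK in h2.
  have uin : u \in (~: S :\: B) :|: A.
    rewrite !inE uS andbT /=; apply/orP; left; apply/negP => /(subsetP hB).
    by rewrite !inE eqxx /= andbF.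
  rewrite uin /=; set c := Num.ceil _ => hc; lia.
Qed.
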